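(* Let $\gamma$ be a smooth curve in $\mathbb{R}^2\setminus\{0\}$, star-shaped with respect to the origin, with nowhere vanishing centroaffine curvature, and such that at no point of $\gamma$ does its osculating Kepler conic hyper-osculate (i.e. have contact of order at least 3 with $\gamma$). Then the osculating Kepler conics of $\gamma$ at any two distinct points are disjoint (equivalently, nested).
   Context: For $v=(a,b,c)\in\mathbb{R}^3$ with $c>0$, the Kepler conic $K(v)$ is the orthogonal projection to the $(x,y)$-plane of the intersection of the cone $x^2+y^2=z^2$ in $\mathbb{R}^3$ with the plane $ax+by+cz=1$; these are conics with a focus at the origin (ellipses when $-a^2-b^2+c^2>0$, parabolas when $=0$, hyperbolas when $<0$). A curve is star-shaped with respect to the origin if $[\gamma,\gamma']\neq0$, where $[u,v]$ is the $2\times2$ determinant; parametrizing so that $[\gamma,\gamma']=1$, the centroaffine curvature $p$ is defined by $\gamma''=-p\gamma$. The osculating Kepler conic at a point of $\gamma$ is the Kepler conic having contact of order at least 2 with $\gamma$ at that point. *)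

(* Defs.v *)
From Stdlib Require Import Reals.
From Coquelicot Require Import Coquelicot.
Open Scope R_scope.

Definition det2 (u v : R * R) : R := fst u * snd v - snd u * fst v.

(* A plane curve gamma = (gx, gy) : R -> R^2, considered on the open
   interval (a,b) with a, b in the extended reals (so R itself is allowed). *)
Definition in_itv (a b : Rbar) (t : R) : Prop := Rbar_lt a t /\ Rbar_lt t b.

Definition pt (gx gy : R -> R) (t : R) : R * R := (gx t, gy t).
Definition vel (gx gy : R -> R) (t : R) : R * R := (Derive gx t, Derive gy t).
Definition acc (gx gy : R -> R) (t : R) : R * R :=
  (Derive_n gx 2 t, Derive_n gy 2 t).

Definition smooth_on (a b : Rbar) (f : R -> R) : Prop :=
  forall (n : nat) (t : R), in_itv a b t -> ex_derive_n f n t.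

Definition star_shaped (a b : Rbar) (gx gy : R -> R) : Prop :=
  forall t, in_itv a b t -> det2 (pt gx gy t) (vel gx gy t) <> 0.

(* Centroaffine curvature p, written in an arbitrary parameter t.
   If s is a parameter with ds/dt = w := [gamma, gamma'], then
   [gamma, gamma_s] = 1 and gamma_ss = - p gamma, so
   p = [gamma_s, gamma_ss] = [gamma', gamma''] / w^3. *)
Definition centroaffine_curvature (gx gy : R -> R) (t : R) : R :=
  det2 (vel gx gy t) (acc gx gy t) / (det2 (pt gx gy t) (vel gx gy t)) ^ 3.

(* Kepler conic K(v), v = (a,b,c): projection to the (x,y)-plane of
   {x^2+y^2 = z^2} ∩ {a x + b y + c z = 1}. *)
Definition kepler_conic (v : R * R * R) (q : R * R) : Prop :=
  let '(ka, kb, kc) := v in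
  exists z : R, fst q ^ 2 + snd q ^ 2 = z ^ 2 /\ ka * fst q + kb * snd q + kc * z = 1.

(* A defining function of K(v) (for c > 0 its zero set is exactly K(v),
   and its gradient does not vanish on K(v)). *)
Definition kepler_eq (v : R * R * R) (q : R * R) : R :=
  let '(ka, kb, kc) := v in
  kc ^ 2 * (fst q ^ 2 + snd q ^ 2) - (1 - ka * fst q - kb * snd q) ^ 2.

(* K(v) has contact of order at least k with gamma at gamma(t):
   kepler_eq v o gamma vanishes to order k+1 at t. *)
Definition contact_ge (gx gy : R -> R) (t : R) (v : R * R * R) (k : nat) : Prop :=
  forall j : nat, (j <= k)%nat ->
    Derive_n (fun s => kepler_eq v (pt gx gy s)) j t = 0.

Definition is_kepler (v : R * R * R) : Prop := let '(_, _, kc) := v in 0 < kc.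

Definition osculating_kepler (gx gy : R -> R) (t : R) (v : R * R * R) : Prop :=
  is_kepler v /\ contact_ge gx gy t v 2.

Definition hyperosculates (gx gy : R -> R) (t : R) : Prop :=
  exists v, osculating_kepler gx gy t v /\ contact_ge gx gy t v 3.

(* Main.v *)
Require Import Defs.
From Stdlib Require Import Reals Lra Psatz Ranalysis5.
From Coquelicot Require Import Coquelicot.
Open Scope R_scope.

Definition det3 (a1 a2 a3 b1 b2 b3 c1 c2 c3 : R) : R :=
  a1*(b2*c3-b3*c2) - a2*(b1*c3-b3*c1) + a3*(b1*c2-b2*c1).

Definition rho (X Y : nat -> R -> R) (k : nat) (t : R) : R :=
  let r0 := sqrt (X 0%nat t * X 0%nat t + Y 0%nat t * Y 0%nat t) in
  let r1 := (X 0%nat t * X 1%nat t + Y 0%nat t * Y 1%nat t) / r0 in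
  let r2 := (X 1%nat t * X 1%nat t + Y 1%nat t * Y 1%nat t + X 0%nat t * X 2%nat t
             + Y 0%nat t * Y 2%nat t - r1 * r1) / r0 in
  match k with
  | 0%nat => r0
  | 1%nat => r1
  | 2%nat => r2
  | _ => (3 * X 1%nat t * X 2%nat t + 3 * Y 1%nat t * Y 2%nat t + X 0%nat t * X 3%nat t
          + Y 0%nat t * Y 3%nat t - 3 * r1 * r2) / r0
  end.

Definition jets_at (X : nat -> R -> R) (t : R) := forall k, is_derive (X k) t (X (S k) t).

Ltac dsubst :=
  repeat match goal with
  | |- context [Derive (fun x => ?F ?k x) ?t] =>
    let H := fresh in
    assert (H : Derive (fun x => F k x) t = F (S k) t) by
      (apply is_derive_unique; match goal with
        | Hf : forall j, is_derive (F j) _ _ |- _ => apply Hf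
        | Hf : forall j, (j <= 2)%nat -> is_derive (F j) _ _ |- _ => apply Hf; lia end);
    rewrite H; clear H
  end.

Ltac exd :=
  repeat match goal with
  | |- _ /\ _ => split
  | |- True => exact I
  | H : forall k, is_derive (?X k) ?t _ |- ex_derive (fun x => ?X ?k x) ?t => exact (ex_intro _ _ (H k))
  | H : forall k, (k <= 2)%nat -> is_derive (?X k) ?t _ |- ex_derive (fun x => ?X ?k x) ?t =>
      exact (ex_intro _ _ (H k ltac:(lia)))
  | H : forall k, (k <= 3)%nat -> ex_derive (?X k) ?t |- ex_derive (fun x => ?X ?k x) ?t =>
      exact (H k ltac:(lia))
  end.

Lemma rho0_pos X Y t : 0 < X 0%nat t ^ 2 + Y 0%nat t ^ 2 -> 0 < rho X Y 0 t.
Proof. intros; unfold rho; cbv zeta iota; apply sqrt_lt_R0; nra. Qed.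

Lemma rho_sq X Y t : 0 < X 0%nat t ^ 2 + Y 0%nat t ^ 2 -> rho X Y 0 t ^ 2 = X 0%nat t ^ 2 + Y 0%nat t ^ 2.
Proof. intros; unfold rho; cbv zeta iota. rewrite <- Rsqr_pow2, Rsqr_sqrt; nra. Qed.

Lemma rho_rel1 X Y t : 0 < X 0%nat t ^ 2 + Y 0%nat t ^ 2 ->
  rho X Y 0 t * rho X Y 1 t = X 0%nat t * X 1%nat t + Y 0%nat t * Y 1%nat t.
Proof. intros H; pose proof (rho0_pos X Y t H). unfold rho in *; cbv zeta iota in *. field. lra. Qed.

Lemma rho_rel2 X Y t : 0 < X 0%nat t ^ 2 + Y 0%nat t ^ 2 ->
  rho X Y 0 t * rho X Y 2 t = X 1%nat t ^ 2 + Y 1%nat t ^ 2 + X 0%nat t * X 2%nat t + Y 0%nat t * Y 2%nat t - rho X Y 1 t ^ 2.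
Proof. intros H; pose proof (rho0_pos X Y t H). unfold rho in *; cbv zeta iota in *. field. lra. Qed.

Lemma rho_rel3 X Y t : 0 < X 0%nat t ^ 2 + Y 0%nat t ^ 2 ->
  rho X Y 0 t * rho X Y 3 t = 3 * X 1%nat t * X 2%nat t + 3 * Y 1%nat t * Y 2%nat t + X 0%nat t * X 3%nat t
          + Y 0%nat t * Y 3%nat t - 3 * rho X Y 1 t * rho X Y 2 t.
Proof. intros H; pose proof (rho0_pos X Y t H). unfold rho in *; cbv zeta iota in *. field. lra. Qed.

Lemma rho_deriv X Y t : jets_at X t -> jets_at Y t -> 0 < X 0%nat t ^ 2 + Y 0%nat t ^ 2 ->
  forall k, (k <= 2)%nat -> is_derive (rho X Y k) t (rho X Y (S k) t).
Proof.
  intros HX HY Hp k Hk. pose proof (rho0_pos X Y t Hp) as H0. unfold jets_at in *.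
  unfold rho in H0; cbv zeta iota in H0.
  destruct k as [|[|[|k]]]; [| | |lia]; unfold rho; cbv zeta iota.
  - auto_derive; [exd; nra|]. dsubst. field. lra.
  - auto_derive; [exd; nra|]. dsubst. field. lra.
  - auto_derive; [exd; nra|]. dsubst. field. lra.
Qed.

Lemma rho3_ex X Y t : jets_at X t -> jets_at Y t -> 0 < X 0%nat t ^ 2 + Y 0%nat t ^ 2 ->
  ex_derive (rho X Y 3) t.
Proof.
  intros HX HY Hp. pose proof (rho0_pos X Y t Hp) as H0. unfold jets_at in *.
  unfold rho in H0 |- *; cbv zeta iota in H0 |- *.
  auto_derive. exd; nra.
Qed.

Lemma alg_D x0 y0 r0 x1 y1 r1 x2 y2 r2 :
  r0^2 = x0^2+y0^2 -> r0*r1 = x0*x1+y0*y1 -> r0*r2 = x1^2+y1^2+x0*x2+y0*y2 - r1^2 ->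
  det3 x0 y0 r0 x1 y1 r1 x2 y2 r2 * r0^3 = (x0*y1 - y0*x1)^3.
Proof.
  intros H0 H1 H2.
  assert (Z0 : r0^2 - (x0^2+y0^2) = 0) by lra.
  assert (Z1 : r0*r1 - (x0*x1+y0*y1) = 0) by lra.
  assert (Z2 : r0*r2 - (x1^2+y1^2+x0*x2+y0*y2 - r1^2) = 0) by lra.
  set (q := x0^2+y0^2) in *. set (P := x0*x1+y0*y1) in *.
  set (S := x1^2+y1^2+x0*x2+y0*y2) in *.
  set (W := x0*y1 - y0*x1). set (W' := x0*y2 - y0*x2). set (K := x1*y2 - y1*x2).
  assert (E : det3 x0 y0 r0 x1 y1 r1 x2 y2 r2 * r0^3 - W^3 =
     r0^2*W*(r0*r2 - (S - r1^2)) - (r0^2*W' + W*(r0*r1+P))*(r0*r1 - P)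
     + (W*S - W'*P + (r0^2+q)*K)*(r0^2 - q)).
  { unfold det3, W, W', K, S, P, q. ring. }
  rewrite Z0, Z1, Z2 in E. lra.
Qed.

Lemma alg_N x0 y0 r0 x1 y1 r1 :
  r0^2 = x0^2+y0^2 -> r0*r1 = x0*x1+y0*y1 ->
  (y0*r1 - r0*y1)^2 + (r0*x1 - x0*r1)^2 = (x0*y1-y0*x1)^2.
Proof.
  intros H0 H1.
  assert (Z0 : r0^2 - (x0^2+y0^2) = 0) by lra.
  assert (Z1 : r0*r1 - (x0*x1+y0*y1) = 0) by lra.
  set (q := x0^2+y0^2) in *. set (P := x0*x1+y0*y1) in *.
  assert (E : (y0*r1 - r0*y1)^2 + (r0*x1 - x0*r1)^2 - (x0*y1-y0*x1)^2 =
    - r1^2*(r0^2 - q) + (r0*r1 - P)*(r0*r1+P) + (r0^2 - q)*(x1^2+y1^2) - 2*P*(r0*r1 - P)).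
  { unfold q, P. ring. }
  rewrite Z0, Z1 in E. lra.
Qed.

Lemma alg_osc x0 y0 r0 x1 y1 r1 x2 y2 r2 a b c :
  r0^2 = x0^2+y0^2 -> r0*r1 = x0*x1+y0*y1 -> r0*r2 = x1^2+y1^2+x0*x2+y0*y2 - r1^2 ->
  0 < r0 -> 0 < c ->
  c^2*(x0^2+y0^2) - (1 - a*x0 - b*y0)^2 = 0 ->
  2*c^2*(x0*x1+y0*y1) + 2*(1 - a*x0 - b*y0)*(a*x1+b*y1) = 0 ->
  2*c^2*(x1^2+y1^2+x0*x2+y0*y2) + 2*(1 - a*x0 - b*y0)*(a*x2+b*y2) - 2*(a*x1+b*y1)^2 = 0 ->
  exists s, c^2 = s^2 /\ a*x0+b*y0+s*r0 = 1 /\ a*x1+b*y1+s*r1 = 0 /\ a*x2+b*y2+s*r2 = 0.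
Proof.
  intros H0 H1 H2 Hr Hc K0 K1 K2.
  set (s := (1 - a*x0 - b*y0)/r0).
  assert (HL : 1 - a*x0 - b*y0 = s*r0) by (unfold s; field; lra).
  rewrite HL in K0, K1, K2. rewrite <- H0 in K0. rewrite <- H1 in K1.
  assert (HS : x1^2+y1^2+x0*x2+y0*y2 = r0*r2 + r1^2) by lra.
  rewrite HS in K2.
  assert (E0 : (c^2 - s^2)*(r0^2) = 0) by (rewrite <- K0; ring).
  assert (Hcs : c^2 = s^2).
  { apply Rmult_integral in E0. destruct E0 as [E0|E0]; [lra|]. nra. }
  assert (Hs : s <> 0) by (intro Hs0; rewrite Hs0 in Hcs; nra).
  rewrite Hcs in K1, K2.
  assert (P1 : a*x1+b*y1+s*r1 = 0).
  { assert (E1 : (2*s*r0)*(a*x1+b*y1+s*r1) = 0) by (rewrite <- K1; ring).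
    apply Rmult_integral in E1. destruct E1 as [E1|E1]; [|exact E1].
    exfalso. assert (2*s*r0 = 2*(s*r0)) by ring. nra. }
  assert (HA1 : a*x1+b*y1 = -(s*r1)) by lra.
  rewrite HA1 in K2.
  exists s. split; [exact Hcs|]. split; [lra|]. split; [exact P1|].
  assert (E2 : (2*s*r0)*(a*x2+b*y2+s*r2) = 0) by (rewrite <- K2; ring).
  apply Rmult_integral in E2. destruct E2 as [E2|E2]; [|exact E2].
  exfalso. assert (2*s*r0 = 2*(s*r0)) by ring. nra.
Qed.

Lemma alg_uniq x0 y0 r0 x1 y1 r1 x2 y2 r2 a b s :
  det3 x0 y0 r0 x1 y1 r1 x2 y2 r2 <> 0 ->
  a*x0+b*y0+s*r0 = 1 -> a*x1+b*y1+s*r1 = 0 -> a*x2+b*y2+s*r2 = 0 ->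
  a = (y1*r2 - r1*y2) / det3 x0 y0 r0 x1 y1 r1 x2 y2 r2 /\
  b = (r1*x2 - x1*r2) / det3 x0 y0 r0 x1 y1 r1 x2 y2 r2 /\
  s = (x1*y2 - y1*x2) / det3 x0 y0 r0 x1 y1 r1 x2 y2 r2.
Proof.
  intros HD P0 P1 P2.
  set (D := det3 x0 y0 r0 x1 y1 r1 x2 y2 r2) in *.
  assert (Ea : D*a - (y1*r2 - r1*y2) = (a*x0+b*y0+s*r0 - 1)*(y1*r2 - r1*y2)
     + (a*x1+b*y1+s*r1)*(y2*r0 - r2*y0) + (a*x2+b*y2+s*r2)*(y0*r1 - r0*y1))
    by (unfold D, det3; ring).
  assert (Eb : D*b - (r1*x2 - x1*r2) = (a*x0+b*y0+s*r0 - 1)*(r1*x2 - x1*r2)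
     + (a*x1+b*y1+s*r1)*(r2*x0 - x2*r0) + (a*x2+b*y2+s*r2)*(r0*x1 - x0*r1))
    by (unfold D, det3; ring).
  assert (Ec : D*s - (x1*y2 - y1*x2) = (a*x0+b*y0+s*r0 - 1)*(x1*y2 - y1*x2)
     + (a*x1+b*y1+s*r1)*(x2*y0 - y2*x0) + (a*x2+b*y2+s*r2)*(x0*y1 - y0*x1))
    by (unfold D, det3; ring).
  rewrite P0, P1, P2 in Ea, Eb, Ec.
  split; [|split]; apply (Rmult_eq_reg_l D); try exact HD; field_simplify; try exact HD; lra.
Qed.

Lemma alg_P x0 y0 r0 x1 y1 r1 x2 y2 r2 x3 y3 r3 :
  det3 x0 y0 r0 x1 y1 r1 x2 y2 r2 <> 0 ->
  let D := det3 x0 y0 r0 x1 y1 r1 x2 y2 r2 in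
  let a := (y1*r2 - r1*y2) / D in
  let b := (r1*x2 - x1*r2) / D in
  let s := (x1*y2 - y1*x2) / D in
  a*x0+b*y0+s*r0 = 1 /\ a*x1+b*y1+s*r1 = 0 /\ a*x2+b*y2+s*r2 = 0 /\
  a*x3+b*y3+s*r3 = det3 x1 y1 r1 x2 y2 r2 x3 y3 r3 / D.
Proof.
  intros HD D a b s. unfold a, b, s, D in *.
  repeat split; unfold det3 in *; field; exact HD.
Qed.

Lemma alg_k x0 y0 r0 x1 y1 r1 x2 y2 r2 x3 y3 r3 a b s c :
  r0^2 = x0^2+y0^2 -> r0*r1 = x0*x1+y0*y1 -> r0*r2 = x1^2+y1^2+x0*x2+y0*y2 - r1^2 ->
  r0*r3 = 3*x1*x2 + 3*y1*y2 + x0*x3 + y0*y3 - 3*r1*r2 ->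
  c^2 = s^2 ->
  a*x0+b*y0+s*r0 = 1 -> a*x1+b*y1+s*r1 = 0 -> a*x2+b*y2+s*r2 = 0 -> a*x3+b*y3+s*r3 = 0 ->
  c^2*(x0^2+y0^2) - (1 - a*x0 - b*y0)^2 = 0 /\
  2*c^2*(x0*x1+y0*y1) + 2*(1 - a*x0 - b*y0)*(a*x1+b*y1) = 0 /\
  2*c^2*(x1^2+y1^2+x0*x2+y0*y2) + 2*(1 - a*x0 - b*y0)*(a*x2+b*y2) - 2*(a*x1+b*y1)^2 = 0 /\
  2*c^2*(3*x1*x2 + 3*y1*y2 + x0*x3 + y0*y3) + 2*(1 - a*x0 - b*y0)*(a*x3+b*y3)
     - 6*(a*x1+b*y1)*(a*x2+b*y2) = 0.
Proof.
  intros H0 H1 H2 H3 Hc P0 P1 P2 P3.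
  assert (HL : 1 - a*x0 - b*y0 = s*r0) by lra.
  assert (A1 : a*x1+b*y1 = -(s*r1)) by lra.
  assert (A2 : a*x2+b*y2 = -(s*r2)) by lra.
  assert (A3 : a*x3+b*y3 = -(s*r3)) by lra.
  assert (S2 : x1^2+y1^2+x0*x2+y0*y2 = r0*r2 + r1^2) by lra.
  assert (S3 : 3*x1*x2 + 3*y1*y2 + x0*x3 + y0*y3 = r0*r3 + 3*r1*r2) by lra.
  rewrite HL, A1, A2, A3, S2, S3, Hc, <- H0, <- H1.
  repeat split; ring.
Qed.

Lemma alg_nonpar x0 y0 r0 x1 y1 r1 e1 e2 :
  r0^2 = x0^2+y0^2 -> r0*r1 = x0*x1+y0*y1 -> e1^2 + e2^2 = 1 ->
  x0*y1 - y0*x1 <> 0 ->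
  (y0*r1 - r0*y1) * e2 = (r0*x1 - x0*r1) * e1 ->
  e2*x0 - e1*y0 = 0.
Proof.
  intros H0 H1 He HW Hp.
  pose proof (alg_N x0 y0 r0 x1 y1 r1 H0 H1) as HN.
  set (N1 := y0*r1 - r0*y1) in *. set (N2 := r0*x1 - x0*r1) in *.
  assert (Lag : (N1*e2 - N2*e1)^2 + (e1*N1+e2*N2)^2 = (N1^2+N2^2)*(e1^2+e2^2)) by ring.
  rewrite He, HN in Lag.
  assert (Z : N1*e2 - N2*e1 = 0) by lra. rewrite Z in Lag.
  assert (HeN : e1*N1+e2*N2 <> 0).
  { intro Q. rewrite Q in Lag. apply HW. nra. }
  assert (Id : (e2*x0 - e1*y0)*(e1*N1+e2*N2) + (e1*x0+e2*y0)*(e1*N2 - e2*N1)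
     = (e1^2+e2^2)*(r0*(x0*x1+y0*y1) - r1*(x0^2+y0^2))) by (unfold N1, N2; ring).
  rewrite <- H0, <- H1 in Id.
  assert (Z2 : e1*N2 - e2*N1 = 0) by lra. rewrite Z2 in Id.
  assert (Z3 : (e2*x0 - e1*y0)*(e1*N1+e2*N2) = 0).
  { rewrite Rmult_0_r, Rplus_0_r in Id. rewrite Id. ring. }
  apply Rmult_integral in Z3. destruct Z3; [assumption|contradiction].
Qed.

Lemma alg_W0 x0 y0 x1 y1 e1 e2 :
  e1^2 + e2^2 = 1 -> e2*x0 - e1*y0 = 0 -> e2*x1 - e1*y1 = 0 -> x0*y1 - y0*x1 = 0.
Proof.
  intros He Z0 Z1.
  assert (E: (x0*y1 - y0*x1) * (e1^2+e2^2) = e1*(x0*(-(e2*x1 - e1*y1))) + e1*(x1*(e2*x0 - e1*y0))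
    + e2*(y1*(e2*x0 - e1*y0)) + e2*(y0*(-(e2*x1 - e1*y1)))) by ring.
  rewrite Z0, Z1, He in E. lra.
Qed.

Lemma alg_final a1 b1 s1 a2 b2 s2 q1 q2 z1 z2 :
  (a2-a1)^2 + (b2-b1)^2 < (s2-s1)^2 -> 0 < s1*s2 ->
  q1^2 + q2^2 = z1^2 -> a1*q1 + b1*q2 + Rabs s1 * z1 = 1 ->
  q1^2 + q2^2 = z2^2 -> a2*q1 + b2*q2 + Rabs s2 * z2 = 1 -> False.
Proof.
  intros HT Hs Q1 E1 Q2 E2.
  assert (Key : forall m y, (a2-a1)^2 + (b2-b1)^2 < m^2 -> y^2 = q1^2+q2^2 ->
     (a2-a1)*q1 + (b2-b1)*q2 + m*y = 0 -> y = 0).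
  { intros m y Hm Hy Hl.
    assert (CS : ((a2-a1)*q1 + (b2-b1)*q2)^2 <= ((a2-a1)^2 + (b2-b1)^2)*(q1^2+q2^2)).
    { assert (Ei : ((a2-a1)^2 + (b2-b1)^2)*(q1^2+q2^2) - ((a2-a1)*q1 + (b2-b1)*q2)^2
          = ((a2-a1)*q2 - (b2-b1)*q1)^2) by ring.
      pose proof (pow2_ge_0 ((a2-a1)*q2 - (b2-b1)*q1)). lra. }
    assert (Hmy : (m*y)^2 <= ((a2-a1)^2 + (b2-b1)^2)*y^2).
    { replace (m*y) with (-((a2-a1)*q1 + (b2-b1)*q2)) by lra. rewrite Hy. replace ((- ((a2 - a1) * q1 + (b2 - b1) * q2)) ^ 2) with (((a2 - a1) * q1 + (b2 - b1) * q2) ^ 2) by ring. exact CS. }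
    destruct (Req_dec y 0) as [|Hy0]; [assumption|exfalso].
    assert (Py : 0 < y^2) by (apply pow2_gt_0; exact Hy0).
    assert (Pm : 0 < (m^2 - ((a2-a1)^2 + (b2-b1)^2)) * y^2) by (apply Rmult_lt_0_compat; lra).
    assert (Em : (m*y)^2 = m^2*y^2) by ring. lra. }
  assert (Hz : z2 = z1 \/ z2 = - z1).
  { assert (Hm : (z2 - z1)*(z2+z1) = 0) by nra. apply Rmult_integral in Hm. lra. }
  assert (Hq0 : z1 = 0 -> False).
  { intro Hz1. assert (Hqq : q1 = 0 /\ q2 = 0) by nra. destruct Hqq as [-> ->].
    rewrite Hz1 in E1. lra. }
  destruct (Rlt_or_le 0 s1) as [Hp|Hn].
  - assert (0 < s2) by nra. rewrite (Rabs_right s1) in E1 by lra.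
    rewrite (Rabs_right s2) in E2 by lra.
    destruct Hz as [-> | ->].
    + apply Hq0. apply (Key (s2 - s1) z1); [lra|lra|lra].
    + apply Hq0. apply (Key (-(s2 + s1)) z1); [nra|lra|lra].
  - assert (s1 < 0) by (destruct Hn; [lra|subst; lra]).
    assert (s2 < 0) by nra.
    rewrite (Rabs_left s1) in E1 by lra. rewrite (Rabs_left s2) in E2 by lra.
    destruct Hz as [-> | ->].
    + apply Hq0. apply (Key (s1 - s2) z1); [nra|lra|lra].
    + apply Hq0. apply (Key (s2 + s1) z1); [nra|lra|lra].
Qed.

Definition gD (A B C : nat -> R -> R) t :=
  det3 (A 0%nat t) (B 0%nat t) (C 0%nat t) (A 1%nat t) (B 1%nat t) (C 1%nat t) (A 2%nat t) (B 2%nat t) (C 2%nat t).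
Definition gw1 (A B C : nat -> R -> R) t := (B 1%nat t * C 2%nat t - C 1%nat t * B 2%nat t) / gD A B C t.
Definition gw2 (A B C : nat -> R -> R) t := (C 1%nat t * A 2%nat t - A 1%nat t * C 2%nat t) / gD A B C t.
Definition gw3 (A B C : nat -> R -> R) t := (A 1%nat t * B 2%nat t - B 1%nat t * A 2%nat t) / gD A B C t.
Definition gL (A B C : nat -> R -> R) t :=
  - det3 (A 1%nat t) (B 1%nat t) (C 1%nat t) (A 2%nat t) (B 2%nat t) (C 2%nat t) (A 3%nat t) (B 3%nat t) (C 3%nat t)
  / (gD A B C t * gD A B C t).

Lemma w_deriv (A B C : nat -> R -> R) t :
  (forall k, (k <= 2)%nat -> is_derive (A k) t (A (S k) t)) ->
  (forall k, (k <= 2)%nat -> is_derive (B k) t (B (S k) t)) ->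
  (forall k, (k <= 2)%nat -> is_derive (C k) t (C (S k) t)) ->
  gD A B C t <> 0 ->
  is_derive (gw1 A B C) t (gL A B C t * (B 0%nat t * C 1%nat t - C 0%nat t * B 1%nat t)) /\
  is_derive (gw2 A B C) t (gL A B C t * (C 0%nat t * A 1%nat t - A 0%nat t * C 1%nat t)) /\
  is_derive (gw3 A B C) t (gL A B C t * (A 0%nat t * B 1%nat t - B 0%nat t * A 1%nat t)).
Proof.
  intros HA HB HC HD. unfold gD, det3 in HD.
  split; [|split]; unfold gw1, gw2, gw3, gL, gD, det3; auto_derive;
    try (exd; exact HD); dsubst; field; exact HD.
Qed.

Lemma lamW_ex (A B C : nat -> R -> R) t :
  (forall k, (k <= 3)%nat -> ex_derive (A k) t) ->
  (forall k, (k <= 3)%nat -> ex_derive (B k) t) ->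
  (forall k, (k <= 3)%nat -> ex_derive (C k) t) ->
  gD A B C t <> 0 ->
  ex_derive (fun s => gL A B C s * (A 0%nat s * B 1%nat s - B 0%nat s * A 1%nat s)) t.
Proof.
  intros HA HB HC HD. unfold gD, det3 in HD.
  unfold gL, gD, det3; auto_derive. exd.
  apply Rmult_integral_contrapositive_currified; intro Q; apply HD; rewrite <- Q; ring.
Qed.

Definition kk (A B : nat -> R -> R) (a b c : R) (j : nat) (t : R) : R :=
  match j with
  | 0%nat => c^2*(A 0%nat t^2 + B 0%nat t^2) - (1 - a*A 0%nat t - b*B 0%nat t)^2
  | 1%nat => 2*c^2*(A 0%nat t*A 1%nat t + B 0%nat t*B 1%nat t)
             + 2*(1 - a*A 0%nat t - b*B 0%nat t)*(a*A 1%nat t + b*B 1%nat t)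
  | 2%nat => 2*c^2*(A 1%nat t^2 + B 1%nat t^2 + A 0%nat t*A 2%nat t + B 0%nat t*B 2%nat t)
             + 2*(1 - a*A 0%nat t - b*B 0%nat t)*(a*A 2%nat t + b*B 2%nat t)
             - 2*(a*A 1%nat t + b*B 1%nat t)^2
  | _ => 2*c^2*(3*A 1%nat t*A 2%nat t + 3*B 1%nat t*B 2%nat t + A 0%nat t*A 3%nat t + B 0%nat t*B 3%nat t)
         + 2*(1 - a*A 0%nat t - b*B 0%nat t)*(a*A 3%nat t + b*B 3%nat t)
         - 6*(a*A 1%nat t + b*B 1%nat t)*(a*A 2%nat t + b*B 2%nat t)
  end.

Lemma kk_deriv A B a b c t : jets_at A t -> jets_at B t ->
  forall j, (j <= 2)%nat -> is_derive (kk A B a b c j) t (kk A B a b c (S j) t).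
Proof.
  intros HA HB j Hj. unfold jets_at in *.
  destruct j as [|[|[|j]]]; [| | |lia]; cbv beta iota delta [kk];
    auto_derive; try exd; dsubst; ring.
Qed.

Lemma Dn_chain (f : R -> R) (K : nat -> R -> R) (U : R -> Prop) :
  (forall s, U s -> locally s U) ->
  (forall s, f s = K 0%nat s) ->
  (forall j s, (j <= 2)%nat -> U s -> is_derive (K j) s (K (S j) s)) ->
  forall j s, (j <= 3)%nat -> U s -> Derive_n f j s = K j s.
Proof.
  intros HU H0 HK j. induction j as [|j IH]; intros s Hj Hs.
  - simpl. apply H0.
  - simpl. rewrite (Derive_ext_loc _ (K j)).
    + apply is_derive_unique. apply HK; [lia|exact Hs].
    + generalize (HU s Hs). apply filter_imp. intros x Hx. apply IH; [lia|exact Hx].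
Qed.

Lemma sign_const (f : R -> R) t1 t2 : t1 < t2 ->
  (forall x, t1 <= x <= t2 -> continuity_pt f x) ->
  (forall x, t1 <= x <= t2 -> f x <> 0) ->
  forall x, t1 <= x <= t2 -> 0 < f t1 * f x.
Proof.
  intros Ht Hc Hz x Hx.
  assert (H1 : f t1 <> 0) by (apply Hz; lra).
  assert (H2 : f x <> 0) by (apply Hz; lra).
  destruct (Req_dec x t1) as [->|Hne].
  { destruct (Rlt_or_le (f t1) 0); [nra|]. destruct H; [nra|]. exfalso; apply H1; auto. }
  assert (Hlt : t1 < x) by lra.
  destruct (Rlt_or_le (f t1) 0) as [Ha|Ha]; destruct (Rlt_or_le (f x) 0) as [Hb|Hb].
  - nra.
  - exfalso. destruct Hb as [Hb|Hb]; [|apply H2; auto].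
    destruct (IVT_interv f t1 x) as [z [Hz1 Hz2]]; try assumption.
    + intros y Hy. apply Hc. lra.
    + apply (Hz z); [lra|exact Hz2].
  - exfalso. destruct Ha as [Ha|Ha]; [|apply H1; auto].
    destruct (IVT_interv (fun y => - f y) t1 x) as [z [Hz1 Hz2]]; try lra.
    + intros y Hy. apply continuity_pt_opp. apply Hc. lra.
    + apply (Hz z); [lra|]. lra.
  - destruct Ha as [Ha|Ha]; [|exfalso; apply H1; auto].
    destruct Hb as [Hb|Hb]; [nra|exfalso; apply H2; auto].
Qed.

Lemma locally_between t1 t2 x : t1 < x < t2 -> locally x (fun y => t1 < y < t2).
Proof.
  intros [H1 H2].
  assert (A1 := open_Rbar_gt' (Finite x) (Finite t1) H1).
  assert (A2 := open_Rbar_lt' (Finite x) (Finite t2) H2).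
  generalize (filter_and _ _ A1 A2). apply filter_imp. simpl. tauto.
Qed.

Lemma deriv_cont f x l : is_derive f x l -> continuity_pt f x.
Proof.
  intro H. apply derivable_continuous_pt. exists l. apply is_derive_Reals. exact H.
Qed.

Lemma timelike (wa wb wc lam N1 N2 W : R -> R) (s t1 t2 : R) :
  t1 < t2 -> s*s = 1 ->
  (forall x, t1 <= x <= t2 -> is_derive wa x (lam x * N1 x) /\ is_derive wb x (lam x * N2 x)
                              /\ is_derive wc x (lam x * W x)) ->
  (forall x, t1 <= x <= t2 -> N1 x ^2 + N2 x ^2 = W x ^2) ->
  (forall x, t1 <= x <= t2 -> 0 < s * (lam x * W x)) ->
  (forall e1 e2, e1^2 + e2^2 = 1 -> (forall x, t1 < x < t2 -> N1 x * e2 = N2 x * e1) -> False) ->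
  (wa t2 - wa t1)^2 + (wb t2 - wb t1)^2 < (wc t2 - wc t1)^2.
Proof.
  intros Ht Hs HD HN HP HNP.
  set (d1 := wa t2 - wa t1). set (d2 := wb t2 - wb t1). set (n := sqrt (d1^2+d2^2)).
  assert (Hn : n^2 = d1^2+d2^2) by (unfold n; rewrite <- Rsqr_pow2, Rsqr_sqrt; nra).
  assert (Hn0 : 0 <= n) by (unfold n; apply sqrt_pos).
  assert (He : exists e1 e2, e1^2 + e2^2 = 1 /\ e1*d1 + e2*d2 = n).
  { destruct (Req_dec n 0) as [Z|Z].
    - exists 1, 0. rewrite Z in Hn. split; [ring|]. rewrite Z. nra.
    - exists (d1/n), (d2/n). split.
      + field_simplify; [|exact Z]. rewrite <- Hn. field. exact Z.
      + field_simplify; [|exact Z]. rewrite <- Hn. field. exact Z. }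
  destruct He as [e1 [e2 [He1 He2]]].
  set (h := fun x => s * wc x - e1 * wa x - e2 * wb x).
  set (hd := fun x => s * (lam x * W x) - e1 * (lam x * N1 x) - e2 * (lam x * N2 x)).
  assert (Hh : forall x, t1 <= x <= t2 -> is_derive h x (hd x)).
  { intros x Hx. destruct (HD x Hx) as [Da [Db Dc]]. unfold h, hd.
    auto_derive.
    - repeat split; [exists (lam x * W x); exact Dc|exists (lam x * N1 x); exact Da|
                     exists (lam x * N2 x); exact Db].
    - replace (Derive (fun x0 : R => wa x0) x) with (lam x * N1 x)
        by (symmetry; apply is_derive_unique; exact Da).
      replace (Derive (fun x0 : R => wb x0) x) with (lam x * N2 x)
        by (symmetry; apply is_derive_unique; exact Db).
      replace (Derive (fun x0 : R => wc x0) x) with (lam x * W x)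
        by (symmetry; apply is_derive_unique; exact Dc).
      ring. }
  assert (Hpos : forall x, t1 <= x <= t2 -> 0 <= hd x).
  { intros x Hx. unfold hd. specialize (HN x Hx). specialize (HP x Hx).
    set (l := lam x) in *. set (w := W x) in *. set (m := e1 * N1 x + e2 * N2 x).
    assert (Lag : (N1 x*e2 - N2 x*e1)^2 + m^2 = (N1 x^2+N2 x^2)*(e1^2+e2^2)) by (unfold m; ring).
    rewrite He1, HN in Lag.
    assert (Hm : (l*m)^2 <= (s*(l*w))^2).
    { assert (E1 : (s*(l*w))^2 = (s*s)*(l^2*w^2)) by ring. rewrite E1, Hs.
      assert (E2 : (l*m)^2 = l^2*m^2) by ring. rewrite E2, Rmult_1_l.
      apply Rmult_le_compat_l; [apply pow2_ge_0|].
      pose proof (pow2_ge_0 (N1 x*e2 - N2 x*e1)). lra. }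
    assert (Hlm : l*m <= s*(l*w)).
    { destruct (Rle_or_lt (l*m) (s*(l*w))) as [Q|Q]; [exact Q|exfalso].
      assert (Hprod: 0 < (l*m - s*(l*w))*(l*m + s*(l*w))) by (apply Rmult_lt_0_compat; lra).
      assert (Ep : (l*m - s*(l*w))*(l*m + s*(l*w)) = (l*m)^2 - (s*(l*w))^2) by ring.
      lra. }
    replace (s * (l * w) - e1 * (l * N1 x) - e2 * (l * N2 x)) with (s*(l*w) - l*m) by (unfold m; ring).
    lra. }
  assert (Hmono : forall x y, t1 <= x -> x <= y -> y <= t2 -> h x <= h y).
  { intros x y Hx Hxy Hy. destruct (Req_dec x y) as [->|Hne]; [lra|].
    destruct (MVT_gen h x y hd) as [c [Hc Hc2]].
    - intros z Hz. rewrite Rmin_left in Hz by lra. rewrite Rmax_right in Hz by lra. apply Hh. lra.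
    - intros z Hz. rewrite Rmin_left in Hz by lra. rewrite Rmax_right in Hz by lra.
      apply (deriv_cont _ _ (hd z)). apply Hh. lra.
    - rewrite Rmin_left in Hc by lra. rewrite Rmax_right in Hc by lra.
      assert (0 <= hd c) by (apply Hpos; lra). nra. }
  assert (Hstrict : h t1 < h t2).
  { destruct (Rlt_or_le (h t1) (h t2)) as [Q|Q]; [exact Q|exfalso].
    apply (HNP e1 e2 He1). intros x Hx.
    assert (Hloc : locally x (fun y => h t1 = h y)).
    { generalize (locally_between t1 t2 x Hx). apply filter_imp. intros y Hy.
      assert (h t1 <= h y) by (apply Hmono; lra).
      assert (h y <= h t2) by (apply Hmono; lra). lra. }
    assert (Hd1 : is_derive (fun _ => h t1) x (hd x)).
    { apply (is_derive_ext_loc h). 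
      - generalize Hloc. apply filter_imp. intros; auto.
      - apply Hh. lra. }
    assert (Hd0 : hd x = 0).
    { rewrite <- (is_derive_unique _ _ _ Hd1). apply Derive_const. }
    assert (Hxx : t1 <= x <= t2) by lra.
    specialize (HN x Hxx). specialize (HP x Hxx).
    unfold hd in Hd0.
    set (l := lam x) in *. set (w := W x) in *. set (m := e1 * N1 x + e2 * N2 x).
    assert (Hl : l <> 0) by (intro Z; rewrite Z in HP; lra).
    assert (Hsm : s*w = m).
    { assert (l*(s*w - m) = 0) by (unfold m; rewrite <- Hd0; ring).
      apply Rmult_integral in H. destruct H; [contradiction|lra]. }
    assert (Lag : (N1 x*e2 - N2 x*e1)^2 + m^2 = (N1 x^2+N2 x^2)*(e1^2+e2^2)) by (unfold m; ring).
    rewrite He1, HN, <- Hsm in Lag.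
    assert (Z : (N1 x*e2 - N2 x*e1)^2 = 0).
    { assert (E : (s*w)^2 = (s*s)*w^2) by ring. rewrite E, Hs in Lag. lra. }
    destruct (Req_dec (N1 x*e2 - N2 x*e1) 0) as [Q0|Q0]; [lra|]. pose proof (pow2_gt_0 _ Q0). lra. }
  unfold h in Hstrict.
  assert (Key : s*(wc t2 - wc t1) > n) by (rewrite <- He2; unfold d1, d2; lra).
  assert (E : (wc t2 - wc t1)^2 = (s*(wc t2 - wc t1))^2).
  { assert (E : (s*(wc t2 - wc t1))^2 = (s*s)*(wc t2 - wc t1)^2) by ring. rewrite E, Hs. ring. }
  rewrite E, <- Hn. fold d1 d2. nra.
Qed.

Definition JX (g : R -> R) : nat -> R -> R := fun k => Derive_n g k.

Definition good (a b : Rbar) (gx gy : R -> R) : Prop :=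
  smooth_on a b gx /\ smooth_on a b gy /\
  (forall t, in_itv a b t -> pt gx gy t <> (0, 0)) /\
  star_shaped a b gx gy /\
  (forall t, in_itv a b t -> centroaffine_curvature gx gy t <> 0) /\
  (forall t, in_itv a b t -> ~ hyperosculates gx gy t).

Lemma itv_open a b t : in_itv a b t -> locally t (in_itv a b).
Proof.
  intros [H1 H2].
  assert (A1 := open_Rbar_gt' (Finite t) a H1).
  assert (A2 := open_Rbar_lt' (Finite t) b H2).
  generalize (filter_and _ _ A1 A2). apply filter_imp. intros x Hx. exact Hx.
Qed.

Lemma itv_conv a b t1 t2 x : in_itv a b t1 -> in_itv a b t2 -> t1 <= x <= t2 -> in_itv a b x.
Proof.
  unfold in_itv. destruct a; destruct b; simpl; intros; lra.
Qed.

Lemma jets_smooth g a b t : smooth_on a b g -> in_itv a b t -> jets_at (JX g) t.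
Proof. intros H Ht k. apply Derive_correct. exact (H (S k) t Ht). Qed.

Lemma good_pos a b gx gy t : good a b gx gy -> in_itv a b t ->
  0 < JX gx 0%nat t ^ 2 + JX gy 0%nat t ^ 2.
Proof.
  intros G Ht. destruct G as [_ [_ [Hne _]]]. specialize (Hne t Ht).
  change (JX gx 0%nat t) with (gx t). change (JX gy 0%nat t) with (gy t).
  destruct (Req_dec (gx t) 0) as [E1|E1].
  - destruct (Req_dec (gy t) 0) as [E2|E2].
    + exfalso. apply Hne. unfold pt. rewrite E1, E2. reflexivity.
    + pose proof (pow2_gt_0 _ E2). pose proof (pow2_ge_0 (gx t)). lra.
  - pose proof (pow2_gt_0 _ E1). pose proof (pow2_ge_0 (gy t)). lra.
Qed.

Lemma good_W a b gx gy t : good a b gx gy -> in_itv a b t ->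
  JX gx 0%nat t * JX gy 1%nat t - JX gy 0%nat t * JX gx 1%nat t <> 0.
Proof.
  intros G Ht. destruct G as [_ [_ [_ [Hs _]]]]. exact (Hs t Ht).
Qed.

Lemma good_K a b gx gy t : good a b gx gy -> in_itv a b t ->
  JX gx 1%nat t * JX gy 2%nat t - JX gy 1%nat t * JX gx 2%nat t <> 0.
Proof.
  intros G Ht HK. destruct G as [_ [_ [_ [_ [Hc _]]]]]. apply (Hc t Ht).
  unfold centroaffine_curvature, det2, vel, acc. cbn [fst snd].
  change (Derive gx t * Derive_n gy 2 t - Derive gy t * Derive_n gx 2 t) with
    (JX gx 1%nat t * JX gy 2%nat t - JX gy 1%nat t * JX gx 2%nat t).
  rewrite HK. unfold Rdiv. ring.
Qed.

Lemma good_rels a b gx gy t : good a b gx gy -> in_itv a b t ->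
  let X := JX gx in let Y := JX gy in
  rho X Y 0 t ^ 2 = X 0%nat t ^ 2 + Y 0%nat t ^ 2 /\
  rho X Y 0 t * rho X Y 1 t = X 0%nat t * X 1%nat t + Y 0%nat t * Y 1%nat t /\
  rho X Y 0 t * rho X Y 2 t = X 1%nat t ^ 2 + Y 1%nat t ^ 2 + X 0%nat t * X 2%nat t + Y 0%nat t * Y 2%nat t - rho X Y 1 t ^ 2 /\
  rho X Y 0 t * rho X Y 3 t = 3 * X 1%nat t * X 2%nat t + 3 * Y 1%nat t * Y 2%nat t + X 0%nat t * X 3%nat t
          + Y 0%nat t * Y 3%nat t - 3 * rho X Y 1 t * rho X Y 2 t /\
  0 < rho X Y 0 t.
Proof.
  intros G Ht X Y. pose proof (good_pos a b gx gy t G Ht) as Hp.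
  split; [apply rho_sq; exact Hp|]. split; [apply rho_rel1; exact Hp|].
  split; [apply rho_rel2; exact Hp|]. split; [apply rho_rel3; exact Hp|].
  apply rho0_pos; exact Hp.
Qed.

Lemma good_D a b gx gy t : good a b gx gy -> in_itv a b t ->
  gD (JX gx) (JX gy) (rho (JX gx) (JX gy)) t <> 0.
Proof.
  intros G Ht. destruct (good_rels a b gx gy t G Ht) as [H0 [H1 [H2 [_ Hr]]]].
  pose proof (good_W a b gx gy t G Ht) as HW.
  pose proof (alg_D _ _ _ _ _ _ _ _ _ H0 H1 H2) as E.
  unfold gD. intro Z. rewrite Z in E. apply (pow_nonzero _ 3 HW). lra.
Qed.

Lemma good_chain a b gx gy t : good a b gx gy -> in_itv a b t ->
  (forall k, (k <= 2)%nat -> is_derive (JX gx k) t (JX gx (S k) t)) /\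
  (forall k, (k <= 2)%nat -> is_derive (JX gy k) t (JX gy (S k) t)) /\
  (forall k, (k <= 2)%nat -> is_derive (rho (JX gx) (JX gy) k) t (rho (JX gx) (JX gy) (S k) t)).
Proof.
  intros G Ht. pose proof G as [Sx [Sy _]].
  pose proof (jets_smooth gx a b t Sx Ht) as JXt. pose proof (jets_smooth gy a b t Sy Ht) as JYt.
  split; [intros k _; apply JXt|]. split; [intros k _; apply JYt|].
  apply rho_deriv; auto. apply (good_pos a b gx gy t G Ht).
Qed.

Lemma good_wderiv a b gx gy t : good a b gx gy -> in_itv a b t ->
  let X := JX gx in let Y := JX gy in let C := rho X Y in
  is_derive (gw1 X Y C) t (gL X Y C t * (Y 0%nat t * C 1%nat t - C 0%nat t * Y 1%nat t)) /\
  is_derive (gw2 X Y C) t (gL X Y C t * (C 0%nat t * X 1%nat t - X 0%nat t * C 1%nat t)) /\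
  is_derive (gw3 X Y C) t (gL X Y C t * (X 0%nat t * Y 1%nat t - Y 0%nat t * X 1%nat t)).
Proof.
  intros G Ht X Y C. destruct (good_chain a b gx gy t G Ht) as [HA [HB HC]].
  apply w_deriv; auto. apply (good_D a b gx gy t G Ht).
Qed.

Lemma Dn_kepler a b gx gy a0 b0 c0 : good a b gx gy ->
  forall j s, (j <= 3)%nat -> in_itv a b s ->
  Derive_n (fun s => kepler_eq (a0, b0, c0) (pt gx gy s)) j s = kk (JX gx) (JX gy) a0 b0 c0 j s.
Proof.
  intros G. pose proof G as [Sx [Sy _]]. apply Dn_chain.
  - intros s Hs. apply itv_open. exact Hs.
  - intros s. reflexivity.
  - intros j s Hj Hs. apply kk_deriv; [apply (jets_smooth gx a b s Sx Hs)|apply (jets_smooth gy a b s Sy Hs)|exact Hj].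
Qed.

Lemma abs_of_sq c s : 0 < c -> c^2 = s^2 -> c = Rabs s.
Proof.
  intros Hc E. destruct (Rcase_abs s) as [Hs|Hs].
  - rewrite Rabs_left by exact Hs.
    assert ((c - -s)*(c + -s) = 0) by (rewrite <- (Rminus_diag (c^2)) at 1; nra).
    apply Rmult_integral in H. destruct H; lra.
  - rewrite Rabs_right by exact Hs.
    assert ((c - s)*(c + s) = 0) by nra.
    apply Rmult_integral in H. destruct H; lra.
Qed.

Lemma good_osc a b gx gy t a0 b0 c0 : good a b gx gy -> in_itv a b t ->
  osculating_kepler gx gy t (a0, b0, c0) ->
  let X := JX gx in let Y := JX gy in let C := rho X Y in
  a0 = gw1 X Y C t /\ b0 = gw2 X Y C t /\ c0 = Rabs (gw3 X Y C t).
Proof.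
  intros G Ht [Hk Hc]. cbv zeta. simpl in Hk.
  destruct (good_rels a b gx gy t G Ht) as [H0 [H1 [H2 [_ Hr]]]].
  pose proof (good_D a b gx gy t G Ht) as HD.
  assert (K0 := Hc 0%nat ltac:(lia)). assert (K1 := Hc 1%nat ltac:(lia)). assert (K2 := Hc 2%nat ltac:(lia)).
  rewrite (Dn_kepler a b gx gy a0 b0 c0 G) in K0, K1, K2 by (auto; lia).
  cbv beta iota delta [kk] in K0, K1, K2.
  destruct (alg_osc _ _ _ _ _ _ _ _ _ a0 b0 c0 H0 H1 H2 Hr Hk K0 K1 K2) as [s [Hcs [P0 [P1 P2]]]].
  unfold gD in HD.
  destruct (alg_uniq _ _ _ _ _ _ _ _ _ a0 b0 s HD P0 P1 P2) as [Ea [Eb Es]].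
  unfold gw1, gw2, gw3, gD. split; [exact Ea|]. split; [exact Eb|].
  rewrite <- Es. apply abs_of_sq; assumption.
Qed.

Lemma good_w3 a b gx gy t : good a b gx gy -> in_itv a b t ->
  gw3 (JX gx) (JX gy) (rho (JX gx) (JX gy)) t <> 0.
Proof.
  intros G Ht. pose proof (good_D a b gx gy t G Ht) as HD. pose proof (good_K a b gx gy t G Ht) as HK.
  unfold gw3. unfold Rdiv. apply Rmult_integral_contrapositive_currified; [exact HK|].
  apply Rinv_neq_0_compat. exact HD.
Qed.

Lemma good_lam a b gx gy t : good a b gx gy -> in_itv a b t ->
  gL (JX gx) (JX gy) (rho (JX gx) (JX gy)) t <> 0.
Proof.
  intros G Ht HL.
  pose proof (good_D a b gx gy t G Ht) as HD.
  destruct (good_rels a b gx gy t G Ht) as [H0 [H1 [H2 [H3 Hr]]]].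
  set (X := JX gx) in *. set (Y := JX gy) in *. set (C := rho X Y) in *.
  assert (Hdet : det3 (X 1%nat t) (Y 1%nat t) (C 1%nat t) (X 2%nat t) (Y 2%nat t) (C 2%nat t)
                      (X 3%nat t) (Y 3%nat t) (C 3%nat t) = 0).
  { assert (E : det3 (X 1%nat t) (Y 1%nat t) (C 1%nat t) (X 2%nat t) (Y 2%nat t) (C 2%nat t)
                      (X 3%nat t) (Y 3%nat t) (C 3%nat t) = - gL X Y C t * (gD X Y C t * gD X Y C t)).
    { unfold gL. field. exact HD. }
    rewrite E, HL. ring. }
  pose proof G as [_ [_ [_ [_ [_ Hh]]]]]. apply (Hh t Ht).
  pose proof (good_w3 a b gx gy t G Ht) as Hw3.
  exists (gw1 X Y C t, gw2 X Y C t, Rabs (gw3 X Y C t)).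
  assert (Hall : forall j, (j <= 3)%nat ->
     Derive_n (fun s => kepler_eq (gw1 X Y C t, gw2 X Y C t, Rabs (gw3 X Y C t)) (pt gx gy s)) j t = 0).
  { intros j Hj. rewrite (Dn_kepler a b gx gy _ _ _ G j t Hj Ht).
    unfold gD in HD.
    pose proof (alg_P _ _ _ _ _ _ _ _ _ (X 3%nat t) (Y 3%nat t) (C 3%nat t) HD) as HP.
    cbv zeta in HP. destruct HP as [P0 [P1 [P2 P3]]]. rewrite Hdet in P3.
    replace (0 / det3 (X 0%nat t) (Y 0%nat t) (C 0%nat t) (X 1%nat t) (Y 1%nat t) (C 1%nat t) (X 2%nat t)
           (Y 2%nat t) (C 2%nat t)) with 0 in P3 by (field; exact HD).
    assert (Hcs : Rabs (gw3 X Y C t) ^ 2 = gw3 X Y C t ^ 2) by apply pow2_abs.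
    unfold gw1, gw2, gw3, gD in *.
    destruct (alg_k _ _ _ _ _ _ _ _ _ _ _ _ _ _ _ _ H0 H1 H2 H3 Hcs P0 P1 P2 P3) as [k0 [k1 [k2 k3]]].
    destruct j as [|[|[|[|j]]]]; [exact k0|exact k1|exact k2|exact k3|lia]. }
  split; [split|].
  - simpl. apply Rabs_pos_lt. exact Hw3.
  - intros j Hj. apply Hall. lia.
  - intros j Hj. apply Hall. exact Hj.
Qed.

Lemma core a b gx gy t1 t2 : good a b gx gy -> in_itv a b t1 -> in_itv a b t2 -> t1 < t2 ->
  forall v1 v2 : R * R * R,
    osculating_kepler gx gy t1 v1 -> osculating_kepler gx gy t2 v2 ->
    forall q : R * R, kepler_conic v1 q -> kepler_conic v2 q -> False.
Proof.
  intros G I1 I2 Hlt v1 v2 O1 O2 q K1 K2.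
  assert (Hin : forall x, t1 <= x <= t2 -> in_itv a b x) by (intros x Hx; exact (itv_conv a b t1 t2 x I1 I2 Hx)).
  pose proof G as [Sx [Sy _]].
  set (X := JX gx). set (Y := JX gy). set (C := rho X Y).
  set (f := fun s => gL X Y C s * (X 0%nat s * Y 1%nat s - Y 0%nat s * X 1%nat s)).
  assert (Hf : forall x, t1 <= x <= t2 -> 0 < f t1 * f x).
  { apply sign_const; [exact Hlt| |].
    - intros x Hx. specialize (Hin x Hx).
      destruct (lamW_ex X Y C x) as [l Hl].
      + intros k _. exists (X (S k) x). apply (jets_smooth gx a b x Sx Hin).
      + intros k _. exists (Y (S k) x). apply (jets_smooth gy a b x Sy Hin).
      + intros k Hk. destruct (good_chain a b gx gy x G Hin) as [_ [_ HC]].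
        destruct (Nat.le_gt_cases k 2) as [Hk2|Hk2].
        * exists (C (S k) x). apply HC. exact Hk2.
        * assert (k = 3%nat) by lia. subst k. apply rho3_ex.
          -- apply (jets_smooth gx a b x Sx Hin).
          -- apply (jets_smooth gy a b x Sy Hin).
          -- apply (good_pos a b gx gy x G Hin).
      + apply (good_D a b gx gy x G Hin).
      + exact (deriv_cont _ _ _ Hl).
    - intros x Hx. specialize (Hin x Hx). unfold f.
      apply Rmult_integral_contrapositive_currified.
      + apply (good_lam a b gx gy x G Hin).
      + apply (good_W a b gx gy x G Hin). }
  set (s := if Rlt_dec 0 (f t1) then 1 else -1).
  assert (Hs : s * s = 1) by (unfold s; destruct (Rlt_dec 0 (f t1)); ring).
  assert (HP : forall x, t1 <= x <= t2 -> 0 < s * f x).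
  { intros x Hx. specialize (Hf x Hx). unfold s. destruct (Rlt_dec 0 (f t1)) as [Q|Q].
    - nra.
    - assert (f t1 <= 0) by lra. nra. }
  assert (HT : (gw1 X Y C t2 - gw1 X Y C t1)^2 + (gw2 X Y C t2 - gw2 X Y C t1)^2
               < (gw3 X Y C t2 - gw3 X Y C t1)^2).
  { apply (timelike (gw1 X Y C) (gw2 X Y C) (gw3 X Y C) (gL X Y C)
      (fun s => Y 0%nat s * C 1%nat s - C 0%nat s * Y 1%nat s)
      (fun s => C 0%nat s * X 1%nat s - X 0%nat s * C 1%nat s)
      (fun s => X 0%nat s * Y 1%nat s - Y 0%nat s * X 1%nat s) s t1 t2 Hlt Hs).
    - intros x Hx. exact (good_wderiv a b gx gy x G (Hin x Hx)).
    - intros x Hx. destruct (good_rels a b gx gy x G (Hin x Hx)) as [H0 [H1 _]].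
      exact (alg_N _ _ _ _ _ _ H0 H1).
    - intros x Hx. exact (HP x Hx).
    - intros e1 e2 He Hpar.
      assert (Hn : forall x, t1 < x < t2 -> e2 * X 0%nat x - e1 * Y 0%nat x = 0).
      { intros x Hx. assert (Hx' : t1 <= x <= t2) by lra.
        destruct (good_rels a b gx gy x G (Hin x Hx')) as [H0 [H1 _]].
        apply (alg_nonpar _ _ _ _ _ _ e1 e2 H0 H1 He (good_W a b gx gy x G (Hin x Hx'))).
        exact (Hpar x Hx). }
      set (m := (t1 + t2) / 2).
      assert (Hm : t1 < m < t2) by (unfold m; lra).
      assert (Hm' : t1 <= m <= t2) by lra.
      pose proof (jets_smooth gx a b m Sx (Hin m Hm')) as JXm.
      pose proof (jets_smooth gy a b m Sy (Hin m Hm')) as JYm.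
      assert (Hd : is_derive (fun x => e2 * X 0%nat x - e1 * Y 0%nat x) m (e2 * X 1%nat m - e1 * Y 1%nat m)).
      { auto_derive.
        - split; [exists (X 1%nat m); apply JXm|]. split; [exists (Y 1%nat m); apply JYm|]. exact I.
        - replace (Derive (fun x : R => X 0%nat x) m) with (X 1%nat m)
            by (symmetry; apply is_derive_unique; apply JXm).
          replace (Derive (fun x : R => Y 0%nat x) m) with (Y 1%nat m)
            by (symmetry; apply is_derive_unique; apply JYm).
          ring. }
      assert (Hd0 : is_derive (fun _ => 0) m (e2 * X 1%nat m - e1 * Y 1%nat m)).
      { apply (is_derive_ext_loc (fun x => e2 * X 0%nat x - e1 * Y 0%nat x)); [|exact Hd].
        generalize (locally_between t1 t2 m Hm). apply filter_imp. intros y Hy. apply Hn. exact Hy. }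
      assert (Z1 : e2 * X 1%nat m - e1 * Y 1%nat m = 0).
      { rewrite <- (is_derive_unique _ _ _ Hd0). apply Derive_const. }
      apply (good_W a b gx gy m G (Hin m Hm')).
      apply (alg_W0 _ _ _ _ e1 e2 He (Hn m Hm) Z1). }
  assert (Hsig : 0 < gw3 X Y C t1 * gw3 X Y C t2).
  { apply (sign_const _ t1 t2); [exact Hlt| | |lra].
    - intros x Hx. destruct (good_wderiv a b gx gy x G (Hin x Hx)) as [_ [_ D3]].
      exact (deriv_cont _ _ _ D3).
    - intros x Hx. apply (good_w3 a b gx gy x G (Hin x Hx)). }
  destruct v1 as [[a1 b1] c1]. destruct v2 as [[a2 b2] c2].
  destruct (good_osc a b gx gy t1 a1 b1 c1 G I1 O1) as [Ea1 [Eb1 Ec1]].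
  destruct (good_osc a b gx gy t2 a2 b2 c2 G I2 O2) as [Ea2 [Eb2 Ec2]].
  destruct K1 as [z1 [Q1 E1]]. destruct K2 as [z2 [Q2 E2]].
  rewrite Ec1 in E1. rewrite Ec2 in E2.
  apply (alg_final a1 b1 (gw3 X Y C t1) a2 b2 (gw3 X Y C t2) (fst q) (snd q) z1 z2); try assumption.
  rewrite Ea1, Eb1, Ea2, Eb2. exact HT.
Qed.

Theorem theorem3 (a b : Rbar) (gx gy : R -> R) :
  smooth_on a b gx -> smooth_on a b gy ->
  (forall t, in_itv a b t -> pt gx gy t <> (0, 0)) ->
  star_shaped a b gx gy ->
  (forall t, in_itv a b t -> centroaffine_curvature gx gy t <> 0) ->
  (forall t, in_itv a b t -> ~ hyperosculates gx gy t) ->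
  forall t1 t2 : R, in_itv a b t1 -> in_itv a b t2 -> t1 <> t2 ->
  forall v1 v2 : R * R * R,
    osculating_kepler gx gy t1 v1 -> osculating_kepler gx gy t2 v2 ->
    forall q : R * R, ~ (kepler_conic v1 q /\ kepler_conic v2 q).
Proof.
  intros H1 H2 H3 H4 H5 H6 t1 t2 I1 I2 Hne v1 v2 O1 O2 q [K1 K2].
  assert (G : good a b gx gy) by (repeat split; assumption).
  destruct (Rlt_or_le t1 t2) as [Hlt|Hle].
  - exact (core a b gx gy t1 t2 G I1 I2 Hlt v1 v2 O1 O2 q K1 K2).
  - assert (Hlt : t2 < t1) by (destruct Hle; [lra|congruence]).
    exact (core a b gx gy t2 t1 G I2 I1 Hlt v2 v1 O2 O1 q K2 K1).
Qed.
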